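(* For $k\ge2$ the polynomial $P_k(x)$ has integer coefficients. If $\ell>3$ is prime, then $$P_{\frac{\ell+1}{2}}(x)\equiv\frac{\ell+1}{2}\left(1+(1-24x)^{\frac{\ell-1}{2}}\right)\pmod{\ell}$$ (coefficientwise).
   Context: $P_k(x)\in\mathbb{Q}[x]$ is defined by $P_0:=0$, $P_1:=1$, and for $k\ge2$, $P_k(x):=-\frac{1}{(2k-1)(k-1)}\sum_{i=1}^{k-1}\left(6x\binom{2k}{2i}(2^{2i-1}-1)+\binom{2k}{2i+2}(2^{2i+1}-1)-2^{2i}\binom{2k}{2i+1}+\binom{2k}{2i}\right)P_{k-i}(x)$. *)

(* Defs.v *)
From HB Require Import structures.
From mathcomp Require Import all_boot all_order all_algebra.
Set Implicit Arguments. Unset Strict Implicit. Unset Printing Implicit Defensive.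
Import Order.TTheory GRing.Theory Num.Theory.
Local Open Scope ring_scope.

Definition coefA (k i : nat) : rat :=
  ('C(k.*2, i.*2))%:R * ((2 ^ (i.*2).-1)%:R - 1).

Definition coefB (k i : nat) : rat :=
  ('C(k.*2, (i.*2).+2))%:R * ((2 ^ (i.*2).+1)%:R - 1)
  - (2 ^ i.*2)%:R * ('C(k.*2, (i.*2).+1))%:R
  + ('C(k.*2, i.*2))%:R.

(* One step of the recurrence, given s = [:: P_0; ...; P_(k-1)]. *)
Definition Pstep (k : nat) (s : seq {poly rat}) : {poly rat} :=
  - (((k.*2).-1)%:R * (k.-1)%:R)^-1 *:
    \sum_(1 <= i < k)
      ((6%:R * coefA k i) *: 'X + (coefB k i)%:P) * nth 0 s (k - i).

Fixpoint Pseq (n : nat) : seq {poly rat} :=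
  match n with
  | 0 => [:: 0]
  | 1 => [:: 0; 1]
  | m.+1 => let s := Pseq m in rcons s (Pstep m.+1 s)
  end.

Definition P (k : nat) : {poly rat} := nth 0 (Pseq k) k.

(* Main.v *)
Require Import Defs.
From HB Require Import structures.
From mathcomp Require Import all_boot all_order all_algebra.
From mathcomp Require Import ring zify.
Import Order.TTheory GRing.Theory Num.Theory.
Local Open Scope ring_scope.
Section Generic.
Variable T : comNzRingType.

Lemma split_parity (f : nat -> T) k :
  \sum_(j < (k.*2).+1) f j = \sum_(i < k.+1) f (i.*2) + \sum_(i < k) f (i.*2).+1.
Proof.
elim: k => [|k IH]; first by rewrite !big_ord1 big_ord0 addr0.
rewrite doubleS 2!big_ord_recr /= IH.
rewrite [in RHS]big_ord_recr [X in _ = _ + X]big_ord_recr /= doubleS. ring.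
Qed.

Definition bt (y s : T) n j := y ^+ (n - j) * s ^+ j *+ 'C(n, j).
Definition Ev (y s : T) k := \sum_(i < k.+1) bt y s (k.*2) (i.*2).
Definition Od (y s : T) k := \sum_(i < k) bt y s (k.*2) (i.*2).+1.

Lemma EvOdP y s k : (y + s) ^+ (k.*2) = Ev y s k + Od y s k.
Proof. by rewrite exprDn (split_parity (fun j => y ^+ (k.*2 - j) * s ^+ j *+ 'C(k.*2, j))). Qed.

Lemma sign_even i : (-1 : T) ^+ (i.*2) = 1.
Proof. by rewrite -mul2n exprM sqrrN expr1n expr1n. Qed.

Lemma EvOdM y s k : (y - s) ^+ (k.*2) = Ev y s k - Od y s k.
Proof.
rewrite exprDn (split_parity (fun j => y ^+ (k.*2 - j) * (-s) ^+ j *+ 'C(k.*2, j))) /Ev /Od -sumrN; congr (_ + _); apply: eq_bigr => i _;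
  rewrite /bt exprNn.
- by rewrite sign_even mul1r.
- by rewrite exprS sign_even mulr1 mulN1r mulrN mulNrn.
Qed.

Lemma even_pow (a b : T) k : a = - b -> a ^+ (k.*2) = b ^+ (k.*2).
Proof. by move=> ->; rewrite -mul2n !exprM sqrrN. Qed.

Lemma sum_inner (h : nat -> T) k : (0 < k)%N ->
  \sum_(i < k.+1) h i = h 0%N + \sum_(1 <= i < k) h i + h k.
Proof.
move=> k0; rewrite -(big_mkord (fun _ => true)) big_nat_recr //= big_ltn //.
Qed.

Definition Ag k i : T := ('C(k.*2, i.*2))%:R * ((2 ^ (i.*2).-1)%:R - 1).
Definition Bg k i : T :=
  ('C(k.*2, (i.*2).+2))%:R * ((2 ^ (i.*2).+1)%:R - 1)
  - (2 ^ i.*2)%:R * ('C(k.*2, (i.*2).+1))%:R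
  + ('C(k.*2, i.*2))%:R.

Definition Wg (y : T) k :=
  \sum_(1 <= i < k) ((y - y ^+ 2) * Ag k i + Bg k i) * y ^+ (k.*2 - i.*2)
  + (((k.*2).-1)%:R * (k.-1)%:R) * y ^+ (k.*2).

End Generic.
Arguments bt {T}. Arguments Ev {T}. Arguments Od {T}. Arguments Wg {T}.
Arguments split_parity {T}. Arguments EvOdP {T}. Arguments EvOdM {T}. Arguments even_pow {T}. Arguments sum_inner {T}.
Section Generic2.
Variable T : comNzRingType.
Implicit Types y : T.

Lemma term_id y k i : (0 < i)%N -> (i < k)%N ->
  (((y - y ^+ 2) * Ag T k i + Bg T k i) * y ^+ (k.*2 - i.*2)) *+ 2 =
  (y - y ^+ 2) * (bt y 2 (k.*2) (i.*2) - bt y 1 (k.*2) (i.*2) *+ 2)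
  + y ^+ 2 * (bt y 2 (k.*2) (i.+1.*2) - bt y 1 (k.*2) (i.+1.*2) *+ 2)
  - y * bt y 2 (k.*2) (i.*2).+1 + bt y 1 (k.*2) (i.*2) *+ 2.
Proof.
case: i => // i _ lt.
rewrite /Ag /Bg /bt.
have [j ->] : exists j, k = (j + i.+2)%N by exists (k - i.+2)%N; rewrite subnK.
have -> : ((j + i.+2).*2 - i.+1.*2 = (j.*2).+2)%N by rewrite -!muln2; lia.
have -> : ((j + i.+2).*2 - i.+2.*2 = (j.*2))%N by rewrite -!muln2; lia.
have -> : ((j + i.+2).*2 - (i.+1.*2).+1 = (j.*2).+1)%N by rewrite -!muln2; lia.
rewrite !doubleS /= !expr1n !mulr1 !natrX !exprS.
ring.
Qed.
End Generic2.
Arguments term_id {T}.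
Section Generic3.
Variable T : comNzRingType.
Implicit Types y : T.

Lemma lin_sum (m n : nat) (Z u v : T) (a b c d e : nat -> T) :
  \sum_(m <= i < n) (Z * (a i - b i *+ 2) + u * (c i - d i *+ 2) - v * e i + b i *+ 2)
  = Z * (\sum_(m <= i < n) a i - (\sum_(m <= i < n) b i) *+ 2)
    + u * (\sum_(m <= i < n) c i - (\sum_(m <= i < n) d i) *+ 2)
    - v * (\sum_(m <= i < n) e i) + (\sum_(m <= i < n) b i) *+ 2.
Proof.
rewrite -!sumrMnl -!sumrB !mulr_sumr; repeat (rewrite -big_split /= || rewrite -sumrB).
by apply: eq_bigr.
Qed.

Lemma bin2_even m : 'C((m.+2).*2, 2) = (m.+2 * (m.*2.+3))%N.
Proof.
rewrite bin2; have -> : ((m.+2).*2 * (m.+2).*2.-1 = (m.+2 * (m.*2.+3)).*2)%N.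
  by rewrite doubleMl doubleS.
by rewrite half_double.
Qed.

Lemma Wg_id y k : (1 < k)%N ->
  Wg y k *+ 2 =
  (y * (1 + (1 - y)) ^+ (k.*2) + y ^+ (k.*2).+1)
  + ((1 - y) * (1 + y) ^+ (k.*2) + (1 - y) ^+ (k.*2).+1)
  - ((2 ^ (k.*2))%:R - 2) * (y - y ^+ 2) - 2.
Proof.
move=> k1; have k0 : (0 < k)%N by apply: ltnW.
have S1 s : \sum_(1 <= i < k) bt y s (k.*2) (i.*2) = Ev y s k - y ^+ (k.*2) - s ^+ (k.*2).
  rewrite /Ev (sum_inner (fun i => bt y s (k.*2) i.*2)) // /bt subn0 expr0 mulr1 bin0 subnn expr0 mul1r binn !mulr1n.
  ring.
have S2 s : \sum_(1 <= i < k) bt y s (k.*2) (i.+1.*2) = Ev y s k - y ^+ (k.*2) - bt y s (k.*2) 2.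
  rewrite /Ev -(big_mkord (fun _ => true) (fun i => bt y s (k.*2) i.*2)) big_ltn // big_ltn // big_add1 /=.
  rewrite {2}/bt subn0 expr0 mulr1 bin0 mulr1n.
  ring.
have S3 s : \sum_(1 <= i < k) bt y s (k.*2) (i.*2).+1 = Od y s k - bt y s (k.*2) 1.
  rewrite /Od -(big_mkord (fun _ => true) (fun i => bt y s (k.*2) i.*2.+1)) big_ltn //; ring.
rewrite /Wg mulrnDl -sumrMnl.
rewrite (eq_big_nat _ _ (fun i (h : (1 <= i < k)%N) => term_id y k i (andP h).1 (andP h).2)).
rewrite lin_sum !S1 !S2 S3.
rewrite (even_pow (1 + (1 - y)) (y - 2) k); last by ring.
rewrite (EvOdM y 2 k) (addrC 1 y) (EvOdP y 1 k) (exprS (1 - y)) (even_pow (1 - y) (y - 1) k); last by ring.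
rewrite (EvOdM y 1 k) !expr1n natrX.
case: k k1 k0 {S1 S2 S3} => [|[|m]] // _ _.
rewrite /bt /= bin1 bin2_even !expr1n.
have -> : ((m.+2).*2 - 2 = m.*2.+2)%N by rewrite -!muln2; lia.
have -> : ((m.+2).*2 - 1 = m.*2.+3)%N by rewrite -!muln2; lia.
rewrite !doubleS !exprS.
ring.
Qed.
End Generic3.
Notation R := {poly rat}.
Definition t : R := - ('X *+ 6).

Fixpoint Fib (n : nat) : R :=
  match n with
  | 0 => 0
  | S n' => match n' with 0 => 1 | S m => Fib n' + t * Fib m end
  end.

Lemma FibSS n : Fib n.+2 = Fib n.+1 + t * Fib n. Proof. by []. Qed.

Definition Lf (f : nat -> R) (p : {poly R}) := \sum_(i < size p) p`_i * f i.

Lemma Lf_widen f (p : {poly R}) N : (size p <= N)%N -> Lf f p = \sum_(i < N) p`_i * f i.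
Proof.
move=> le; rewrite /Lf (big_ord_widen _ (fun i => p`_i * f i) le) big_mkcond /=.
apply: eq_bigr => i _; case: ifP => // /negbT; rewrite -leqNgt => h.
by rewrite nth_default // mul0r.
Qed.

Arguments Lf_widen f {p N}.

Lemma Lf0 f : Lf f 0 = 0.
Proof. by rewrite /Lf size_poly0 big_ord0. Qed.

Lemma Lf_add f p q : Lf f (p + q) = Lf f p + Lf f q.
Proof.
have hp : (size p <= size p + size q)%N by apply: leq_addr.
have hq : (size q <= size p + size q)%N by apply: leq_addl.
have hpq : (size (p + q)%R <= size p + size q)%N.
  by apply: leq_trans (size_polyD _ _) _; rewrite geq_max hp hq.
rewrite (Lf_widen f hp) (Lf_widen f hq) (Lf_widen f hpq) -big_split /=.
by apply: eq_bigr => i _; rewrite coefD mulrDl.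
Qed.

Lemma Lf_scale f c p : Lf f (c *: p) = c * Lf f p.
Proof.
rewrite (Lf_widen f (size_scale_leq c p)) /Lf mulr_sumr.
by apply: eq_bigr => i _; rewrite coefZ mulrA.
Qed.

Lemma Lf_C f c p : Lf f (c%:P * p) = c * Lf f p.
Proof. by rewrite mul_polyC Lf_scale. Qed.

Lemma Lf_opp f p : Lf f (- p) = - Lf f p.
Proof. by rewrite -scaleN1r Lf_scale mulN1r. Qed.

Lemma Lf_sub f p q : Lf f (p - q) = Lf f p - Lf f q.
Proof. by rewrite Lf_add Lf_opp. Qed.

Lemma Lf_sum f I (r : seq I) (P : pred I) (G : I -> {poly R}) :
  Lf f (\sum_(i <- r | P i) G i) = \sum_(i <- r | P i) Lf f (G i).
Proof. exact: (big_morph _ (Lf_add f) (Lf0 f)). Qed.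

Lemma Lf_X f p : Lf f ('X * p) = Lf (fun i => f i.+1) p.
Proof.
have h : (size ('X * p)%R <= (size p).+1)%N.
  by apply: leq_trans (size_polyMleq _ _) _; rewrite size_polyX.
rewrite (Lf_widen f h) big_ord_recl coefXM /= mul0r add0r.
rewrite (Lf_widen _ (leqnn (size p))).
by apply: eq_bigr => i _; rewrite coefXM.
Qed.

Lemma Lf_Xn f n : Lf f ('X^n) = f n.
Proof.
elim: n f => [|n IH] f.
  by rewrite expr0 /Lf size_poly1 big_ord1 coef1 mul1r.
by rewrite exprS Lf_X IH.
Qed.

Lemma Lf_CX f c n : Lf f (c%:P * 'X^n) = c * f n.
Proof. by rewrite Lf_C Lf_Xn. Qed.
Definition dd : {poly R} := 'X ^+ 2 - 'X - t%:P.
Notation L := (Lf Fib).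

Lemma L_d q : L (dd * q) = 0.
Proof.
have -> : dd * q = 'X * ('X * q) - 'X * q - t%:P * q by rewrite /dd; ring.
rewrite !Lf_sub !Lf_X Lf_C /Lf mulr_sumr -!sumrB; apply: big1 => i _.
rewrite FibSS; ring.
Qed.

Lemma L1 : L 1 = 0.
Proof. by rewrite -(expr0 'X) Lf_Xn. Qed.

Lemma Lpow m : L ((1 - 'X) ^+ m) = - Fib m.
Proof.
suff: L ((1 - 'X) ^+ m) = - Fib m /\ L ((1 - 'X) ^+ m.+1) = - Fib m.+1 by case.
elim: m => [|m [IH1 IH2]].
  split; first by rewrite expr0 L1 oppr0.
  by rewrite expr1 Lf_sub L1 -(expr1 'X) Lf_Xn sub0r.
split => //.
have -> : (1 - 'X) ^+ m.+2 = (1 - 'X) ^+ m.+1 + t%:P * (1 - 'X) ^+ m + dd * (1 - 'X) ^+ m.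
  by rewrite /dd !exprS; ring.
rewrite !Lf_add Lf_C L_d IH1 IH2 FibSS; ring.
Qed.

Lemma L_comp p : L (p \Po (1 - 'X)) = - L p.
Proof.
rewrite comp_polyE Lf_sum [in RHS]/Lf -sumrN; apply: eq_bigr => i _.
by rewrite Lf_scale Lpow mulrN.
Qed.

Lemma comp_exp (p q : {poly R}) n : (p ^+ n) \Po q = (p \Po q) ^+ n.
Proof.
elim: n => [|n IH]; first by rewrite !expr0 -polyC1 comp_polyC.
by rewrite !exprS comp_polyM IH.
Qed.
Lemma dbl0 (p : R) : p + p = 0 -> p = 0.
Proof.
move=> h; have : (2%:R^-1 : rat) *: (p + p) = 0 by rewrite h scaler0.
by rewrite -mulr2n -scaler_nat scalerA mulVf ?scale1r.
Qed.

Lemma LX : L 'X = 1.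
Proof. by rewrite -(expr1 'X) Lf_Xn. Qed.

Lemma L2 : L 2 = 0.
Proof. by rewrite mulr2n Lf_add L1 addr0. Qed.

Lemma L_W k : (1 < k)%N -> L (Wg ('X : {poly R}) k) = 0.
Proof.
move=> k1; apply: dbl0; rewrite -Lf_add -mulr2n Wg_id //.
set G := 'X * (1 + (1 - 'X)) ^+ (k.*2) + 'X ^+ (k.*2).+1.
have -> : (1 - 'X) * (1 + 'X) ^+ (k.*2) + (1 - 'X) ^+ (k.*2).+1 = G \Po (1 - 'X).
  rewrite /G comp_polyD comp_polyM !comp_exp comp_polyX comp_polyD comp_polyB.
  rewrite -polyC1 comp_polyC polyC1 comp_polyX.
  by have -> : (1 - (1 - 'X) : {poly R}) = 'X by ring.
have -> : ((2 ^ (k.*2))%:R - 2 : {poly R}) = ((2 ^ (k.*2))%:R - 2)%:P.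
  by rewrite polyCB !polyC_natr.
rewrite !Lf_sub Lf_add L_comp Lf_C Lf_sub LX Lf_Xn L2.
rewrite FibSS /=; ring.
Qed.

Lemma Rec k : (1 < k)%N ->
  \sum_(1 <= i < k) ((6%:R * coefA k i) *: 'X + (Defs.coefB k i)%:P) * Fib ((k - i)%N.*2)
  = - (((k.*2).-1)%:R * (k.-1)%:R) *: Fib (k.*2).
Proof.
move=> k1.
set y := ('X : {poly R}).
set cst : rat := ((k.*2).-1)%:R * (k.-1)%:R.
set c := fun i => ((6%:R * coefA k i) *: 'X + (Defs.coefB k i)%:P).
have hc i : (c i)%:P = ((y - y ^+ 2) * Ag _ k i + Bg _ k i) + dd * Ag _ k i.
  rewrite /c /dd /Ag /Bg /coefA /Defs.coefB /t -mul_polyC.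
  rewrite !(polyCD, polyCM, polyCB, polyCN, polyC_natr, polyCMn) !polyC1 /y; ring.
set M := \sum_(1 <= i < k) Ag _ k i * y ^+ (k.*2 - i.*2).
have hV : \sum_(1 <= i < k) (c i)%:P * y ^+ (k.*2 - i.*2) + (cst%:P)%:P * y ^+ (k.*2)
          = Wg y k + dd * M.
  rewrite /Wg /M mulr_sumr addrAC -big_split /=.
  have -> : (cst%:P)%:P = ((k.*2).-1)%:R * (k.-1)%:R :> {poly R}.
    by rewrite /cst !polyCM !polyC_natr.
  congr (_ + _); apply: eq_bigr => i _; rewrite hc; ring.
have E := congr1 L hV.
rewrite (Lf_add _ (Wg y k)) L_d addr0 L_W // Lf_add Lf_sum Lf_CX in E.
move: E; under eq_bigr => i _ do rewrite Lf_CX.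
move/eqP; rewrite addr_eq0 => /eqP E.
rewrite -mul_polyC polyCN mulNr -E.
by apply: eq_big_nat => i /andP [_ lt]; rewrite doubleB.
Qed.
Lemma cst_neq0 k : (1 < k)%N -> ((k.*2).-1%:R * (k.-1)%:R : rat) != 0.
Proof.
case: k => [|[|k]] // _; rewrite mulf_neq0 // pnatr_eq0 //.
Qed.

Lemma Pseq_eq n : Pseq n = [seq Fib (i.*2) | i <- iota 0 n.+1].
Proof.
elim: n => [|n IH]; first by [].
case: n IH => [|n] IH; first by rewrite /= mulr0 addr0.
have -> : Pseq n.+2 = rcons (Pseq n.+1) (Pstep n.+2 (Pseq n.+1)) by [].
have hi : iota 0 n.+3 = rcons (iota 0 n.+2) n.+2 by rewrite -cats1 -(iotaD 0 n.+2 1) addn1.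
rewrite IH hi map_rcons; congr (rcons _ _).
rewrite /Pstep.
have -> : \sum_(1 <= i < n.+2)
     ((6%:R * coefA n.+2 i) *: 'X + (Defs.coefB n.+2 i)%:P) *
     nth 0 [seq Fib i0.*2 | i0 <- iota 0 n.+2] (n.+2 - i)
   = \sum_(1 <= i < n.+2)
     ((6%:R * coefA n.+2 i) *: 'X + (Defs.coefB n.+2 i)%:P) * Fib ((n.+2 - i)%N.*2).
  apply: eq_big_nat => i /andP [i1 i2].
  rewrite (nth_map 0%N); last by rewrite size_iota; lia.
  by rewrite nth_iota ?add0n //; lia.
rewrite Rec // scalerA mulNr mulrN mulVf ?cst_neq0 //.
by rewrite opprK scale1r.
Qed.

Lemma P_Fib k : P k = Fib (k.*2).
Proof.
rewrite /P Pseq_eq (nth_map 0%N) ?size_iota // nth_iota //.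
Qed.
Lemma coef_Fib n j : (Fib n.+1)`_j = (-6) ^+ j * ('C(n - j, j))%:R.
Proof.
suff: forall j, (Fib n.+1)`_j = (-6) ^+ j * ('C(n - j, j))%:R /\
                (Fib n.+2)`_j = (-6) ^+ j * ('C(n.+1 - j, j))%:R by move/(_ j) => [].
elim: n => [|n IH] {}j.
  split.
    by rewrite coef1; case: j => [|j]; rewrite ?expr0 ?mul1r // sub0n bin0n mulr0.
  rewrite FibSS /= mulr0 addr0 coef1; case: j => [|[|j]]; rewrite ?expr0 ?mul1r //=.
  by rewrite subSS sub0n bin0n mulr0.
split; first by case: (IH j).
rewrite FibSS coefD /t mulNr coefN mulrnAl coefMn coefXM.
case: j => [|j]; first by rewrite !expr0 !mul1r !subn0 !bin0 (proj2 (IH 0%N)) expr0 mul1r subn0 bin0 subr0.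
rewrite /= (proj2 (IH j.+1)) (proj1 (IH j)).
case: (leqP j n) => h.
  rewrite !subSS (subSn h) binS natrD exprS; ring.
rewrite !subSS.
have -> : (n - j = 0)%N by apply/eqP; rewrite subn_eq0 ltnW.
have -> : (n.+1 - j = 0)%N by apply/eqP; rewrite subn_eq0.
rewrite !bin0n !mulr0.
have -> : (j == 0%N) = false by case: j h.
by rewrite mulr0 mul0rn oppr0 addr0.
Qed.

Lemma coef_1pcX (c : rat) m j : ((1 + c *: 'X) ^+ m)`_j = c ^+ j *+ 'C(m, j).
Proof.
elim: m j => [|m IH] j.
  by rewrite expr0 coef1; case: j => [|j] //; rewrite bin0n mulr0n.
rewrite exprS mulrDl mul1r coefD -scalerAl coefZ coefXM IH.
case: j => [|j]; first by rewrite !bin0 mulr0 addr0.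
by rewrite /= IH binS mulrnDr exprS mulrnAr.
Qed.
Lemma ndvd_fact p i : prime p -> (i < p)%N -> ~~ (p %| i`!)%N.
Proof.
move=> pp; elim: i => [|i IH] lt.
  by rewrite fact0 dvdn1 neq_ltn prime_gt1 ?orbT.
rewrite factS Euclid_dvdM // negb_or IH ?(ltnW lt) // andbT.
by apply/negP => /(dvdn_leq (ltn0Sn i)); rewrite leqNgt lt.
Qed.

Lemma A_rec j : (j * \prod_(i < j.+1) (j.+1 + i) = \prod_(i < j) (j + i) * (j + j) * (j + j).+1)%N.
Proof.
have E1 : (\prod_(i < j.+2) (j + i) = j * \prod_(i < j.+1) (j.+1 + i))%N.
  rewrite big_ord_recl addn0; congr (_ * _); apply: eq_bigr => i _.
  by rewrite /= /bump /= add1n addnS.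
have E2 : (\prod_(i < j.+2) (j + i) = \prod_(i < j) (j + i) * (j + j) * (j + j).+1)%N.
  by rewrite !big_ord_recr /= addnS.
by rewrite -E1 E2.
Qed.

Lemma AB j : (2 * \prod_(i < j.+1) (j.+1 + i) = 2 ^ j.+1 * \prod_(i < j.+1) (2 * i + 1))%N.
Proof.
elim: j => [|j IH]; first by rewrite !big_ord1.
apply/eqP; rewrite -(eqn_pmul2l (ltn0Sn j)); apply/eqP.
rewrite mulnCA A_rec (big_ord_recr j.+1) /=.
move: IH; set a := (\prod_(i < j.+1) (j.+1 + i))%N; set b := (\prod_(i < j.+1) (2 * i + 1))%N.
rewrite expnS => IH.
rewrite !expnS -/(2 ^ j)%N; set p := (2 ^ j)%N in IH *.
have -> : (2 * (a * (j.+1 + j.+1) * (j.+1 + j.+1).+1) = (2 * a) * ((j.+1 + j.+1) * (j.+1 + j.+1).+1))%N by rewrite !mulnA.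
rewrite IH; nia.
Qed.

Section FieldPart.
Variable F : fieldType.

Lemma prodN_ord (f : nat -> F) j : \prod_(i < j) - f i = (-1) ^+ j * \prod_(i < j) f i.
Proof.
elim: j => [|j IH]; first by rewrite !big_ord0 expr0 mul1r.
by rewrite !big_ord_recr /= IH exprS; ring.
Qed.

Lemma prodM_ord (c : F) (f : nat -> F) j : \prod_(i < j) (c * f i) = c ^+ j * \prod_(i < j) f i.
Proof.
elim: j => [|j IH]; first by rewrite !big_ord0 expr0 mul1r.
by rewrite !big_ord_recr /= IH exprS; ring.
Qed.

Lemma cong_F m j : (m.*2.+1)%:R = 0 :> F ->
  (forall i, (0 < i <= m)%N -> i`!%:R != 0 :> F) ->
  (-6) ^+ j * ('C(m.*2.+1 - j, j))%:R = (m.+1)%:R * ((j == 0%N)%:R + (-24) ^+ j * ('C(m, j))%:R) :> F.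
Proof.
move=> hl hf.
have neg a b : (a + b)%N = m.*2.+1 -> a%:R = - (b%:R) :> F.
  by move=> h; apply/eqP; rewrite -addr_eq0 -natrD h hl.
case: j => [|j].
  rewrite !expr0 !mul1r subn0 !bin0 ?mul1r.
  transitivity ((m.*2.+1)%:R + 1 : F); first by rewrite hl add0r.
  rewrite -muln2 eqxx /= !mulrSr natrM; ring.
have Hm : (m.+1)%:R * 2 = 1 :> F.
  transitivity ((m.*2.+1)%:R + 1 : F); last by rewrite hl add0r.
  rewrite -muln2 !mulrSr natrM; ring.
rewrite /= add0r.
case: (leqP j.+1 m) => hJ; last first.
  rewrite (bin_small hJ) mulr0 bin_small ?mulr0 //.
  rewrite -!muln2; lia.
apply: (mulfI (hf j.+1 _)); first by rewrite hJ.
set J := j.+1.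
rewrite [LHS]mulrCA -natrM mulnC bin_ffact ffact_prod natr_prod.
have H1 : \prod_(i < J) ((m.*2.+1 - J - i)%N)%:R = \prod_(i < J) - ((J + i)%N)%:R :> F.
  apply: eq_bigr => i _; apply: neg; have := ltn_ord i; rewrite /J -!muln2 in hJ *; lia.
rewrite H1 (prodN_ord (fun i => ((J + i)%N)%:R)) -natr_prod.
have H2 : (\prod_(i < J) (m - i))%:R * 2 ^+ J = (-1) ^+ J * (\prod_(i < J) (2 * i + 1))%:R :> F.
  rewrite mulrC natr_prod -(prodM_ord 2 (fun i => ((m - i)%N)%:R)) natr_prod.
  rewrite -(prodN_ord (fun i => ((2 * i + 1)%N)%:R)).
  apply: eq_bigr => i _; rewrite -natrM; apply: neg; have := ltn_ord i; rewrite /J -!muln2 in hJ *; lia.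
have HA : 2 * (\prod_(i < J) (J + i))%:R = 2 ^+ J * (\prod_(i < J) (2 * i + 1))%:R :> F.
  by rewrite -natrX -!natrM (AB j).
have -> : J`!%:R * (m.+1%:R * ((-24) ^+ J * 'C(m, J)%:R)) =
          m.+1%:R * ((-6) ^+ J * 2 ^+ J * 2 ^+ J) * ('C(m, J) * J`!)%:R :> F.
  rewrite natrM -!exprMn; have -> : (-6 * 2 * 2 : F) = -24 by ring.
  ring.
rewrite bin_ffact ffact_prod.
set a := (\prod_(i < J) (J + i))%:R : F.
set b := (\prod_(i < J) (2 * i + 1))%:R : F.
set q := (\prod_(i < J) (m - i))%:R : F.
transitivity ((-6) ^+ J * (-1) ^+ J * (m.+1)%:R * (2 * a) : F).
  have e : (-6) ^+ J * (-1) ^+ J * m.+1%:R * (2 * a) = (-6) ^+ J * (-1) ^+ J * a * (m.+1%:R * 2) :> F by ring.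
  by rewrite e Hm; ring.
rewrite HA.
have e : m.+1%:R * ((-6) ^+ J * 2 ^+ J * 2 ^+ J) * q = m.+1%:R * (-6) ^+ J * 2 ^+ J * (q * 2 ^+ J) :> F by ring.
rewrite e /q H2; ring.
Qed.
End FieldPart.
Lemma castD (R0 : comNzRingType) (m j : nat) :
  (((- 6%:R) ^+ j * ('C(m.*2.+1 - j, j))%:R
    - (m.+1)%:R * ((j == 0%N)%:R + (- 24%:R) ^+ j * ('C(m, j))%:R) : int)%:~R : R0)
  = (- 6%:R) ^+ j * ('C(m.*2.+1 - j, j))%:R
    - (m.+1)%:R * ((j == 0%N)%:R + (- 24%:R) ^+ j * ('C(m, j))%:R).
Proof. by rewrite !(rmorphB, rmorphM, rmorphD, rmorphXn, rmorphN, rmorph_nat). Qed.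

Theorem corollary7p2 :
  (forall (k : nat), (2 <= k)%N -> forall i : nat, (P k)`_i \is a Num.int) /\
  (forall (l : nat), prime l -> (3 < l)%N ->
     forall i : nat, exists z : int,
       (P (l.+1 %/ 2) - (l.+1 %/ 2)%:R *: (1 + (1 - 24%:R *: 'X) ^+ (l.-1 %/ 2)))`_i
         = l%:R * z%:~R).
Proof.
split.
  move=> k hk i; rewrite P_Fib.
  have -> : k.*2 = (k.*2).-1.+1 by rewrite prednK // double_gt0 ltnW.
  rewrite coef_Fib; apply: rpredM; last exact: natr_int.
  by apply: rpredX; rewrite rpredN natr_int.
move=> l pl l3 j.
have [m hl] : exists m, l = m.*2.+1.
  case: (even_prime pl) => [h|h]; first by rewrite h in l3.
  by exists l./2; rewrite -[LHS](odd_double_half l) h add1n.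
subst l.
have hk : ((m.*2.+1).+1 %/ 2 = m.+1)%N.
  by rewrite -[(m.*2.+1).+1]/((m.+1).*2) -muln2 mulnK.
have hm : ((m.*2.+1).-1 %/ 2 = m)%N by rewrite /= -muln2 mulnK.
have e2 : P m.+1 = Fib (m.*2.+1).+1 by rewrite P_Fib.
rewrite hk hm e2.
rewrite coefB coef_Fib coefZ coefD coef1 -scaleNr coef_1pcX -(mulr_natr _ 'C(m, j)).
set D : int := (- 6%:R) ^+ j * ('C(m.*2.+1 - j, j))%:R
    - (m.+1)%:R * ((j == 0%N)%:R + (- 24%:R) ^+ j * ('C(m, j))%:R).
have dv : ((m.*2.+1)%:Z %| D)%Z.
  rewrite (dvdz_pcharf (pchar_Fp pl)) /D castD subr_eq0; apply/eqP.
  apply: cong_F.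
    by apply/eqP; rewrite -(dvdn_pcharf (pchar_Fp pl)).
  move=> i /andP [i0 im]; rewrite -(dvdn_pcharf (pchar_Fp pl)); apply: ndvd_fact => //.
  rewrite -muln2; lia.
exists (D %/ (m.*2.+1)%:Z)%Z.
rewrite -[LHS]castD -/D.
rewrite -{1}(divzK dv) rmorphM /= mulrC.
by [].
Qed.
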